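(* Let $(A,\triangleright_A,\triangleleft_A)$ be a pre-Leibniz algebra with sub-adjacent Leibniz algebra $(A,\bullet_A)$, $x\bullet_A y=x\triangleright_A y+x\triangleleft_A y$. Define multiplications on $A\oplus A^*$ by $$(x+a^* )\bullet_1(y+b^* )=x\bullet_A y+\mathcal L^*_{\triangleright_A}(x)b^*-(\mathcal L^*_{\triangleright_A}+\mathcal R^*_{\triangleleft_A})(y)a^*,$$ $$(x+a^* )\bullet_2(y+b^* )=x\bullet_A y+\mathcal L^*_{\bullet_A}(x)b^*-(\mathcal L^*_{\bullet_A}+\mathcal R^*_{\bullet_A})(y)a^*,$$ for $x,y\in A$, $a^*,b^*\in A^*$. Let $x\vdash_A y=x\triangleright_A y$ and $x\dashv_A y=-y\triangleleft_A x$. Then $(A\oplus A^*,\bullet_1,\bullet_2)$ is a compatible Leibniz algebra if and only if $(A,\vdash_A,\dashv_A)$ is a Novikov dialgebra.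
   Context: All vector spaces are finite-dimensional over a field $\mathbb K$ of characteristic zero. For a multiplication $\ast$, $\mathcal L_\ast(x)y=x\ast y$, $\mathcal R_\ast(x)y=y\ast x$; for $f:A\to\mathrm{End}(V)$, $f^*:A\to\mathrm{End}(V^* )$ is $\langle f^*(x)u^*,v\rangle=-\langle u^*,f(x)v\rangle$. A pre-Leibniz algebra is a vector space $A$ with multiplications $\triangleright_A,\triangleleft_A$ such that for all $x,y,z$: $x\triangleright_A(y\triangleright_A z)=(x\triangleright_A y)\triangleright_A z+(x\triangleleft_A y)\triangleright_A z+y\triangleright_A(x\triangleright_A z)$; $x\triangleleft_A(y\triangleright_A z)=y\triangleright_A(x\triangleleft_A z)-(y\triangleright_A x)\triangleleft_A z-x\triangleleft_A(y\triangleleft_A z)$; $(x\triangleright_A y)\triangleleft_A z=-(y\triangleleft_A x)\triangleleft_A z$. Then $(A,\bullet_A)$ is a Leibniz algebra. A Leibniz algebra is a vector space with multiplication $\circ$ satisfying $x\circ(y\circ z)=(x\circ y)\circ z+y\circ(x\circ z)$. A compatible Leibniz algebra is $(B,\circ_1,\circ_2)$ with both $(B,\circ_i)$ Leibniz algebras and, for all $x,y,z$: $x\circ_2(y\circ_1 z)+x\circ_1(y\circ_2 z)-(x\circ_1 y)\circ_2 z-(x\circ_2 y)\circ_1 z-y\circ_2(x\circ_1 z)-y\circ_1(x\circ_2 z)=0$. A Novikov dialgebra is $(A,\vdash_A,\dashv_A)$ satisfying for all $x,y,z$: (ND1) $x\vdash_A(y\vdash_A z)=(x\vdash_A y)\vdash_A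 z-(y\dashv_A x)\vdash_A z+y\vdash_A(x\vdash_A z)$; (ND2) $(y\vdash_A z)\dashv_A x=y\vdash_A(z\dashv_A x)-z\dashv_A(y\vdash_A x)+(z\dashv_A y)\dashv_A x$; (ND3) $z\dashv_A(x\vdash_A y)=z\dashv_A(x\dashv_A y)$; (ND4) $(z\dashv_A y)\dashv_A x=(z\dashv_A x)\dashv_A y$; (ND5) $(y\dashv_A x)\vdash_A z=(y\vdash_A z)\dashv_A x=(y\vdash_A x)\vdash_A z$. *)

(* Defs.v *)
From HB Require Import structures.
From mathcomp Require Import all_boot all_order all_algebra.
Set Implicit Arguments. Unset Strict Implicit. Unset Printing Implicit Defensive.
Import GRing.Theory.
Local Open Scope ring_scope.

Definition bilinear_mul (K : fieldType) (A : lmodType K) (m : A -> A -> A) : Prop :=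
  (forall x, linear (m x)) /\ (forall y, linear (fun x => m x y)).

Definition leibniz (V : zmodType) (m : V -> V -> V) : Prop :=
  forall x y z, m x (m y z) = m (m x y) z + m y (m x z).

Definition compatible_leibniz (V : zmodType) (m1 m2 : V -> V -> V) : Prop :=
  [/\ leibniz m1, leibniz m2 &
   forall x y z,
     m2 x (m1 y z) + m1 x (m2 y z) - m2 (m1 x y) z - m1 (m2 x y) z
       - m2 y (m1 x z) - m1 y (m2 x z) = 0].

Definition pre_leibniz (A : zmodType) (l r : A -> A -> A) : Prop :=
  [/\ forall x y z, l x (l y z) = l (l x y) z + l (r x y) z + l y (l x z),
      forall x y z, r x (l y z) = l y (r x z) - r (l y x) z - r x (r y z) &
      forall x y z, r (l x y) z = - r (r y x) z].

Definition subadj (A : zmodType) (l r : A -> A -> A) : A -> A -> A :=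
  fun x y => l x y + r x y.

Definition novikov_dialgebra (A : zmodType) (ld rd : A -> A -> A) : Prop :=
  [/\ forall x y z, ld x (ld y z) = ld (ld x y) z - ld (rd y x) z + ld y (ld x z),
      forall x y z, rd (ld y z) x = ld y (rd z x) - rd z (ld y x) + rd (rd z y) x,
      forall x y z, rd z (ld x y) = rd z (rd x y),
      forall x y z, rd (rd z y) x = rd (rd z x) y &
      forall x y z, ld (rd y x) z = rd (ld y z) x /\ rd (ld y z) x = ld (ld y x) z].

Definition dual (K : fieldType) (A : vectType K) := 'Hom(A, K^o).

Definition dual_rep (K : fieldType) (A : vectType K) (f : A -> A -> A)
  (x : A) (u : dual A) : dual A := linfun (fun v : A => - u (f x v)).

Definition Lmul (A : Type) (m : A -> A -> A) : A -> A -> A := m.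
Definition Rmul (A : Type) (m : A -> A -> A) : A -> A -> A := fun x y => m y x.

Definition dsum_mul (K : fieldType) (A : vectType K) (mA ml mr : A -> A -> A)
  (p q : A * dual A) : A * dual A :=
  (mA p.1 q.1,
   dual_rep (Lmul ml) p.1 q.2
     - (dual_rep (Lmul ml) q.1 p.2 + dual_rep (Rmul mr) q.1 p.2)).

(* Main.v *)
Require Import Defs.
From HB Require Import structures.
From mathcomp Require Import all_boot all_order all_algebra.
From mathcomp Require Import ring.
Import GRing.Theory.
Local Open Scope ring_scope.
Set Implicit Arguments. Unset Strict Implicit.

Lemma nondeg (K : fieldType) (A : vectType K) (w : A) :
  (forall u : 'Hom(A, K^o), u w = 0) -> w = 0.
Proof.
move=> H; rewrite (coord_vbasis (memvf w)); apply: big1 => i _.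
have := H (linfun (coord (vbasis fullv) i : A -> K^o)); rewrite lfunE /= => ->.
by rewrite scale0r.
Qed.

Lemma eqA (K : fieldType) (A : vectType K) (w1 w2 : A) :
  (forall u : 'Hom(A, K^o), u w1 = u w2) -> w1 = w2.
Proof.
move=> H; apply/eqP; rewrite -subr_eq0; apply/eqP; apply: nondeg => u.
by rewrite raddfB /= (H u) subrr.
Qed.

Lemma linfunE' (K : fieldType) (A : vectType K) (f : A -> K^o) (Hf : linear f) v :
  linfun f v = f v.
Proof.
pose g : {linear A -> K^o} := HB.pack f (GRing.isLinear.Build K A K^o *:%R f Hf).
exact: (lfunE g v).
Qed.


Lemma lin_add (K : fieldType) (A : vectType K) (f : A -> A) (Hf : linear f) x y :
  f (x + y) = f x + f y.
Proof.
pose g : {linear A -> A} := HB.pack f (GRing.isLinear.Build K A A *:%R f Hf).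
exact: (raddfD g x y).
Qed.
Lemma lin_opp (K : fieldType) (A : vectType K) (f : A -> A) (Hf : linear f) x :
  f (- x) = - f x.
Proof.
pose g : {linear A -> A} := HB.pack f (GRing.isLinear.Build K A A *:%R f Hf).
exact: (raddfN g x).
Qed.

Lemma bD1 (K : fieldType) (A : vectType K) (m : A -> A -> A) (bm : bilinear_mul m) x y z :
  m (x + y) z = m x z + m y z.
Proof. exact: (lin_add (bm.2 z)). Qed.
Lemma bD2 (K : fieldType) (A : vectType K) (m : A -> A -> A) (bm : bilinear_mul m) x y z :
  m x (y + z) = m x y + m x z.
Proof. exact: (lin_add (bm.1 x)). Qed.
Lemma bN1 (K : fieldType) (A : vectType K) (m : A -> A -> A) (bm : bilinear_mul m) x y :
  m (- x) y = - m x y.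
Proof. exact: (lin_opp (bm.2 y)). Qed.
Lemma bN2 (K : fieldType) (A : vectType K) (m : A -> A -> A) (bm : bilinear_mul m) x y :
  m x (- y) = - m x y.
Proof. exact: (lin_opp (bm.1 x)). Qed.

Lemma lin_dual (K : fieldType) (A : vectType K) (g : A -> A) (Hg : linear g)
  (u : 'Hom(A, K^o)) : linear (fun v => - u (g v)).
Proof.
move=> k w1 w2 /=; rewrite Hg raddfD /= linearZ /= opprD.
by rewrite -[X in X + _ = _]mulrN.
Qed.

Lemma lin_sum (K : fieldType) (A : vectType K) (f g : A -> A) (Hf : linear f) (Hg : linear g) :
  linear (fun v => f v + g v).
Proof. by move=> k w1 w2; rewrite Hf Hg scalerDr !addrA (addrAC _ (f w2)). Qed.

Lemma drE (K : fieldType) (A : vectType K) (f : A -> A -> A) x u v (Hf : linear (f x)) :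
  dual_rep f x u v = - u (f x v).
Proof. by rewrite /dual_rep linfunE' //; apply: lin_dual. Qed.

Lemma drL (K : fieldType) (A : vectType K) (l : A -> A -> A) (bl : bilinear_mul l) x u v :
  dual_rep (Lmul l) x u v = - u (l x v).
Proof. by rewrite drE //; apply: bl.1. Qed.
Lemma drR (K : fieldType) (A : vectType K) (l : A -> A -> A) (bl : bilinear_mul l) x u v :
  dual_rep (Rmul l) x u v = - u (l v x).
Proof. by rewrite drE //; apply: bl.2. Qed.
Lemma drLs (K : fieldType) (A : vectType K) (l r : A -> A -> A) (bl : bilinear_mul l)
  (br : bilinear_mul r) x u v :
  dual_rep (Lmul (subadj l r)) x u v = - u (l x v + r x v).
Proof. by rewrite drE //; apply: lin_sum; [apply: bl.1 | apply: br.1]. Qed.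
Lemma drRs (K : fieldType) (A : vectType K) (l r : A -> A -> A) (bl : bilinear_mul l)
  (br : bilinear_mul r) x u v :
  dual_rep (Rmul (subadj l r)) x u v = - u (l v x + r v x).
Proof. by rewrite drE //; apply: (@lin_sum _ _ (fun w => l w x) (fun w => r w x)); [apply: bl.2 | apply: br.2]. Qed.

Lemma sndD (T1 T2 : zmodType) (p q : T1 * T2) : (p + q).2 = p.2 + q.2. Proof. by []. Qed.
Lemma sndN (T1 T2 : zmodType) (p : T1 * T2) : (- p).2 = - p.2. Proof. by []. Qed.
Lemma fstD (T1 T2 : zmodType) (p q : T1 * T2) : (p + q).1 = p.1 + q.1. Proof. by []. Qed.
Lemma fstN (T1 T2 : zmodType) (p : T1 * T2) : (- p).1 = - p.1. Proof. by []. Qed.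
Lemma fst_pair (T1 T2 : Type) (x : T1) (y : T2) : (x, y).1 = x. Proof. by []. Qed.
Lemma snd_pair (T1 T2 : Type) (x : T1) (y : T2) : (x, y).2 = y. Proof. by []. Qed.
Lemma ds1 (K : fieldType) (A : vectType K) (mA ml mr : A -> A -> A) p q :
  (dsum_mul mA ml mr p q).1 = mA p.1 q.1. Proof. by []. Qed.
Lemma ds2 (K : fieldType) (A : vectType K) (mA ml mr : A -> A -> A) p q :
  (dsum_mul mA ml mr p q).2 = dual_rep (Lmul ml) p.1 q.2
     - (dual_rep (Lmul ml) q.1 p.2 + dual_rep (Rmul mr) q.1 p.2). Proof. by []. Qed.

Lemma uD (K : fieldType) (A : vectType K) (u : 'Hom(A, K^o)) (w1 w2 : A) :
  u (w1 + w2) = u w1 + u w2. Proof. by rewrite raddfD. Qed.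
Lemma u0 (K : fieldType) (A : vectType K) (u : 'Hom(A, K^o)) : u 0 = 0 :> K^o.
Proof. by rewrite raddf0. Qed.
Lemma fst0 (T1 T2 : zmodType) : (0 : T1 * T2).1 = 0. Proof. by []. Qed.
Lemma snd0 (T1 T2 : zmodType) : (0 : T1 * T2).2 = 0. Proof. by []. Qed.
Lemma pair_ext (T1 T2 : Type) (p q : T1 * T2) : p.1 = q.1 -> p.2 = q.2 -> p = q.
Proof. by case: p => ? ?; case: q => ? ? /= -> ->. Qed.
Lemma uN (K : fieldType) (A : vectType K) (u : 'Hom(A, K^o)) (w : A) :
  u (- w) = - u w. Proof. by rewrite raddfN. Qed.

Definition rdf (K : fieldType) (A : vectType K) (r : A -> A -> A) (a b : A) := - r b a.
Definition pl1 (K : fieldType) (A : vectType K) (l r : A -> A -> A) (x y z : A) :=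
  l x (l y z) - (l (l x y) z + l (r x y) z + l y (l x z)).
Definition pl2 (K : fieldType) (A : vectType K) (l r : A -> A -> A) (x y z : A) :=
  r x (l y z) - (l y (r x z) - r (l y x) z - r x (r y z)).
Definition pl3 (K : fieldType) (A : vectType K) (l r : A -> A -> A) (x y z : A) :=
  r (l x y) z - - r (r y x) z.
Definition nd1 (K : fieldType) (A : vectType K) (l r : A -> A -> A) (x y z : A) :=
  l x (l y z) - (l (l x y) z - l (rdf r y x) z + l y (l x z)).
Definition nd2 (K : fieldType) (A : vectType K) (l r : A -> A -> A) (x y z : A) :=
  rdf r (l y z) x - (l y (rdf r z x) - rdf r z (l y x) + rdf r (rdf r z y) x).
Definition nd3 (K : fieldType) (A : vectType K) (l r : A -> A -> A) (x y z : A) :=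
  rdf r z (l x y) - rdf r z (rdf r x y).
Definition nd4 (K : fieldType) (A : vectType K) (l r : A -> A -> A) (x y z : A) :=
  rdf r (rdf r z y) x - rdf r (rdf r z x) y.
Definition nd5 (K : fieldType) (A : vectType K) (l r : A -> A -> A) (x y z : A) :=
  l (rdf r y x) z - rdf r (l y z) x.
Definition nd6 (K : fieldType) (A : vectType K) (l r : A -> A -> A) (x y z : A) :=
  rdf r (l y z) x - l (l y x) z.
Definition g1 (K : fieldType) (A : vectType K) (l r : A -> A -> A) (x y z : A) :=
  (- (l (x) (l (y) (z)) + l (x) (l (y) (z))) - l (x) (r (y) (z)) + (l (y) (l (x) (z)) + l (y) (l (x) (z))) + l (y) (r (x) (z)) + (l (l (x) (y)) (z) + l (l (x) (y)) (z)) + (l (r (x) (y)) (z) + l (r (x) (y)) (z)) - r (x) (l (y) (z)) + r (y) (l (x) (z)) + r (l (x) (y)) (z) + r (r (x) (y)) (z)).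
Definition g2 (K : fieldType) (A : vectType K) (l r : A -> A -> A) (x y z : A) :=
  ((l (x) (l (y) (z)) + l (x) (l (y) (z))) + l (x) (l (z) (y)) + l (x) (r (y) (z)) + (l (x) (r (z) (y)) + l (x) (r (z) (y))) - (l (y) (l (x) (z)) + l (y) (l (x) (z))) - l (y) (r (x) (z)) - l (z) (l (x) (y)) - l (z) (r (x) (y)) - (l (l (x) (y)) (z) + l (l (x) (y)) (z)) - l (l (x) (z)) (y) - (l (r (x) (y)) (z) + l (r (x) (y)) (z)) + r (x) (l (y) (z)) + r (x) (r (z) (y)) - r (y) (l (x) (z)) - (r (z) (l (x) (y)) + r (z) (l (x) (y))) - (r (z) (r (x) (y)) + r (z) (r (x) (y))) - r (l (x) (y)) (z) - (r (l (x) (z)) (y) + r (l (x) (z)) (y)) - r (r (x) (y)) (z) - r (r (x) (z)) (y)).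
Definition g3 (K : fieldType) (A : vectType K) (l r : A -> A -> A) (x y z : A) :=
  (- (l (x) (l (y) (z)) + l (x) (l (y) (z))) - l (x) (l (z) (y)) - l (x) (r (y) (z)) - (l (x) (r (z) (y)) + l (x) (r (z) (y))) + (l (y) (l (x) (z)) + l (y) (l (x) (z))) + l (y) (r (x) (z)) + l (z) (l (x) (y)) + l (z) (r (x) (y)) + (l (l (x) (y)) (z) + l (l (x) (y)) (z)) + l (l (x) (z)) (y) - l (l (y) (z)) (x) + (l (r (x) (y)) (z) + l (r (x) (y)) (z)) - l (r (z) (y)) (x) - r (x) (l (y) (z)) - r (x) (r (z) (y)) + r (y) (l (x) (z)) + (r (z) (l (x) (y)) + r (z) (l (x) (y))) + (r (z) (r (x) (y)) + r (z) (r (x) (y))) + r (l (x) (y)) (z) + (r (l (x) (z)) (y) + r (l (x) (z)) (y)) - (r (l (y) (z)) (x) + r (l (y) (z)) (x)) - r (l (z) (y)) (x) + r (r (x) (y)) (z) + r (r (x) (z)) (y) - r (r (y) (z)) (x) - (r (r (z) (y)) (x) + r (r (z) (y)) (x))).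

Ltac push bl br := rewrite ?(bD1 bl, bD2 bl, bN1 bl, bN2 bl, bD1 br, bD2 br, bN1 br, bN2 br).
Ltac unf := rewrite /pl1 /pl2 /pl3 /nd1 /nd2 /nd3 /nd4 /nd5 /nd6 /g1 /g2 /g3 /rdf /subadj.
Ltac zmod_eq bl br := apply: eqA => u; unf; push bl br; rewrite ?(uD, uN); ring.
Ltac dual_eval bl br :=
  rewrite ?(sndD, sndN, fstD, fstN, ds1, ds2, fst_pair, snd_pair);
  rewrite ?(add_lfunE, opp_lfunE, zero_lfunE, drLs bl br, drRs bl br, drL bl, drR br);
  unf; push bl br; rewrite ?(uD, uN); ring.
Lemma m1_dual (K : fieldType) (A : vectType K) (l r : A -> A -> A) (bil_l : bilinear_mul l) (bil_r : bilinear_mul r) (x y z : A) (a b c : dual A) (v : A) :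
  (dsum_mul (subadj l r) l r (x, a) (dsum_mul (subadj l r) l r (y, b) (z, c))).2 v =
  (dsum_mul (subadj l r) l r (dsum_mul (subadj l r) l r (x, a) (y, b)) (z, c)).2 v + (dsum_mul (subadj l r) l r (y, b) (dsum_mul (subadj l r) l r (x, a) (z, c))).2 v
  + (a (- pl1 l r y z v - pl3 l r z v y + pl2 l r v y z) + b (pl1 l r x z v - pl2 l r v x z) + c (- pl1 l r x y v)).
Proof. dual_eval bil_l bil_r. Qed.

Lemma m2_dual (K : fieldType) (A : vectType K) (l r : A -> A -> A) (bil_l : bilinear_mul l) (bil_r : bilinear_mul r) (x y z : A) (a b c : dual A) (v : A) :
  (dsum_mul (subadj l r) (subadj l r) (subadj l r) (x, a) (dsum_mul (subadj l r) (subadj l r) (subadj l r) (y, b) (z, c))).2 v =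
  (dsum_mul (subadj l r) (subadj l r) (subadj l r) (dsum_mul (subadj l r) (subadj l r) (subadj l r) (x, a) (y, b)) (z, c)).2 v + (dsum_mul (subadj l r) (subadj l r) (subadj l r) (y, b) (dsum_mul (subadj l r) (subadj l r) (subadj l r) (x, a) (z, c))).2 v
  + (a (- pl1 l r y z v - pl2 l r y z v - pl1 l r y v z - pl2 l r y v z + pl2 l r z y v + pl3 l r z y v + pl1 l r z v y - pl3 l r z v y + pl2 l r v y z + pl3 l r v y z + pl1 l r v z y - pl3 l r v z y) + b (pl1 l r x z v + pl2 l r x z v + pl1 l r x v z + pl2 l r x v z - pl2 l r z x v - pl3 l r z x v - pl2 l r v x z - pl3 l r v x z) + c (- pl1 l r x y v - pl2 l r x y v + pl2 l r y x v + pl3 l r y x v)).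
Proof. dual_eval bil_l bil_r. Qed.

Lemma leibA (K : fieldType) (A : vectType K) (l r : A -> A -> A) (bil_l : bilinear_mul l) (bil_r : bilinear_mul r) (x y z : A) :
  subadj l r x (subadj l r y z) - (subadj l r (subadj l r x y) z + subadj l r y (subadj l r x z)) = (pl1 l r x y z + pl2 l r x y z - pl2 l r y x z - pl3 l r y x z).
Proof. zmod_eq bil_l bil_r. Qed.

Lemma compA (K : fieldType) (A : vectType K) (l r : A -> A -> A) (bil_l : bilinear_mul l) (bil_r : bilinear_mul r) (x y z : A) :
  subadj l r x (subadj l r y z) + subadj l r x (subadj l r y z) - subadj l r (subadj l r x y) z
  - subadj l r (subadj l r x y) z - subadj l r y (subadj l r x z) - subadj l r y (subadj l r x z) = ((pl1 l r x y z + pl1 l r x y z) + (pl2 l r x y z + pl2 l r x y z) - (pl2 l r y x z + pl2 l r y x z) - (pl3 l r y x z + pl3 l r y x z)).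
Proof. zmod_eq bil_l bil_r. Qed.

Lemma comp_dual (K : fieldType) (A : vectType K) (l r : A -> A -> A) (bil_l : bilinear_mul l) (bil_r : bilinear_mul r) (x y z : A) (a b c : dual A) (v : A) :
  ((dsum_mul (subadj l r) (subadj l r) (subadj l r)) (x, a) ((dsum_mul (subadj l r) l r) (y, b) (z, c)) + (dsum_mul (subadj l r) l r) (x, a) ((dsum_mul (subadj l r) (subadj l r) (subadj l r)) (y, b) (z, c)) - (dsum_mul (subadj l r) (subadj l r) (subadj l r)) ((dsum_mul (subadj l r) l r) (x, a) (y, b)) (z, c)
   - (dsum_mul (subadj l r) l r) ((dsum_mul (subadj l r) (subadj l r) (subadj l r)) (x, a) (y, b)) (z, c) - (dsum_mul (subadj l r) (subadj l r) (subadj l r)) (y, b) ((dsum_mul (subadj l r) l r) (x, a) (z, c)) - (dsum_mul (subadj l r) l r) (y, b) ((dsum_mul (subadj l r) (subadj l r) (subadj l r)) (x, a) (z, c))).2 v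
  = a (g3 l r y z v) + b (g2 l r x z v) + c (g1 l r x y v).
Proof. dual_eval bil_l bil_r. Qed.

Lemma gcert1 (K : fieldType) (A : vectType K) (l r : A -> A -> A) (bil_l : bilinear_mul l) (bil_r : bilinear_mul r) (x y z : A) : g1 l r x y z = (- (pl1 l r x y z + pl1 l r x y z) - pl2 l r x y z + pl2 l r y x z + pl3 l r y x z + nd4 l r x y z).
Proof. zmod_eq bil_l bil_r. Qed.

Lemma gcert2 (K : fieldType) (A : vectType K) (l r : A -> A -> A) (bil_l : bilinear_mul l) (bil_r : bilinear_mul r) (x y z : A) : g2 l r x y z = ((pl1 l r x y z + pl1 l r x y z) + pl2 l r x y z + pl1 l r x z y + pl2 l r x z y - pl2 l r y x z - pl3 l r y x z - (pl2 l r z x y + pl2 l r z x y) - pl3 l r z x y - nd4 l r x y z - nd5 l r x z y).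
Proof. zmod_eq bil_l bil_r. Qed.

Lemma gcert3 (K : fieldType) (A : vectType K) (l r : A -> A -> A) (bil_l : bilinear_mul l) (bil_r : bilinear_mul r) (x y z : A) : g3 l r x y z = (- (pl1 l r x y z + pl1 l r x y z) - pl2 l r x y z - pl1 l r x z y - pl2 l r x z y + pl2 l r y x z + pl3 l r y x z + pl1 l r y z x - (pl3 l r y z x + pl3 l r y z x) + (pl2 l r z x y + pl2 l r z x y) + pl3 l r z x y + pl1 l r z y x - pl3 l r z y x + nd4 l r x y z + nd5 l r x z y - nd5 l r y z x - nd6 l r y z x).
Proof. zmod_eq bil_l bil_r. Qed.

Lemma ndcert1 (K : fieldType) (A : vectType K) (l r : A -> A -> A) (bil_l : bilinear_mul l) (bil_r : bilinear_mul r) (x y z : A) : nd1 l r x y z = (pl1 l r x y z).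
Proof. zmod_eq bil_l bil_r. Qed.

Lemma ndcert2 (K : fieldType) (A : vectType K) (l r : A -> A -> A) (bil_l : bilinear_mul l) (bil_r : bilinear_mul r) (x y z : A) : nd2 l r x y z = (- pl2 l r x y z).
Proof. zmod_eq bil_l bil_r. Qed.

Lemma ndcert3 (K : fieldType) (A : vectType K) (l r : A -> A -> A) (bil_l : bilinear_mul l) (bil_r : bilinear_mul r) (x y z : A) : nd3 l r x y z = (- pl3 l r x y z).
Proof. zmod_eq bil_l bil_r. Qed.

Lemma ndcert4 (K : fieldType) (A : vectType K) (l r : A -> A -> A) (bil_l : bilinear_mul l) (bil_r : bilinear_mul r) (x y z : A) : nd4 l r x y z = ((pl1 l r x y z + pl1 l r x y z) + pl2 l r x y z - pl2 l r y x z - pl3 l r y x z + g1 l r x y z).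
Proof. zmod_eq bil_l bil_r. Qed.

Lemma ndcert5 (K : fieldType) (A : vectType K) (l r : A -> A -> A) (bil_l : bilinear_mul l) (bil_r : bilinear_mul r) (x y z : A) : nd5 l r x y z = (pl1 l r x y z + pl2 l r x y z - (pl2 l r y x z + pl2 l r y x z) - pl3 l r y x z - g1 l r x z y - g2 l r x z y).
Proof. zmod_eq bil_l bil_r. Qed.

Lemma ndcert6 (K : fieldType) (A : vectType K) (l r : A -> A -> A) (bil_l : bilinear_mul l) (bil_r : bilinear_mul r) (x y z : A) : nd6 l r x y z = (- pl2 l r x y z - (pl3 l r x y z + pl3 l r x y z) + pl1 l r y x z + (pl2 l r y x z + pl2 l r y x z) + g1 l r x z y + g2 l r x z y - g2 l r z x y - g3 l r z x y).
Proof. zmod_eq bil_l bil_r. Qed.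


Lemma snd_app (K : fieldType) (A : vectType K) (v : A) (p : A * dual A) :
  p = 0 -> p.2 v = 0.
Proof. by move=> ->; exact: zero_lfunE. Qed.

Ltac simpl0 := rewrite ?(oppr0, addr0, add0r, subr0, sub0r, u0).

Theorem proposition3p9 (K : fieldType) (charK0 : [pchar K] =i pred0)
  (A : vectType K) (l r : A -> A -> A)
  (bil_l : bilinear_mul l) (bil_r : bilinear_mul r)
  (preA : pre_leibniz l r) :
  compatible_leibniz
    (dsum_mul (subadj l r) l r)
    (dsum_mul (subadj l r) (subadj l r) (subadj l r))
  <-> novikov_dialgebra l (fun x y => - r y x).
Proof.
have [P1 P2 P3] := preA.
have hpl1 : forall x y z, pl1 l r x y z = 0.
  by move=> x y z; apply/eqP; rewrite subr_eq0; apply/eqP; exact: P1.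
have hpl2 : forall x y z, pl2 l r x y z = 0.
  by move=> x y z; apply/eqP; rewrite subr_eq0; apply/eqP; exact: P2.
have hpl3 : forall x y z, pl3 l r x y z = 0.
  by move=> x y z; apply/eqP; rewrite subr_eq0; apply/eqP; exact: P3.
split.
- case=> _ _ Hc.
  have hg1 : forall x y v, g1 l r x y v = 0.
    move=> x y v; apply: nondeg => c.
    have := snd_app v (Hc (x, 0) (y, 0) (0, c)).
    rewrite comp_dual // !zero_lfunE !add0r => ->.
    by [].
  have hg2 : forall x z v, g2 l r x z v = 0.
    move=> x z v; apply: nondeg => b.
    have := snd_app v (Hc (x, 0) (0, b) (z, 0)).
    rewrite comp_dual // !zero_lfunE add0r addr0 => ->.
    by [].
  have hg3 : forall y z v, g3 l r y z v = 0.
    move=> y z v; apply: nondeg => a.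
    have := snd_app v (Hc (0, a) (y, 0) (z, 0)).
    rewrite comp_dual // !zero_lfunE !addr0 => ->.
    by [].
  split.
  + move=> x y z; apply/eqP; rewrite -subr_eq0; apply/eqP.
    change (nd1 l r x y z = 0); rewrite ndcert1 //; rewrite ?(hpl1, hpl2, hpl3, hg1, hg2, hg3); simpl0; done.
  + move=> x y z; apply/eqP; rewrite -subr_eq0; apply/eqP.
    change (nd2 l r x y z = 0); rewrite ndcert2 //; rewrite ?(hpl1, hpl2, hpl3, hg1, hg2, hg3); simpl0; done.
  + move=> x y z; apply/eqP; rewrite -subr_eq0; apply/eqP.
    change (nd3 l r x y z = 0); rewrite ndcert3 //; rewrite ?(hpl1, hpl2, hpl3, hg1, hg2, hg3); simpl0; done.
  + move=> x y z; apply/eqP; rewrite -subr_eq0; apply/eqP.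
    change (nd4 l r x y z = 0); rewrite ndcert4 //; rewrite ?(hpl1, hpl2, hpl3, hg1, hg2, hg3); simpl0; done.
  + move=> x y z; split; apply/eqP; rewrite -subr_eq0; apply/eqP.
    * change (nd5 l r x y z = 0); rewrite ndcert5 //; rewrite ?(hpl1, hpl2, hpl3, hg1, hg2, hg3); simpl0; done.
    * change (nd6 l r x y z = 0); rewrite ndcert6 //; rewrite ?(hpl1, hpl2, hpl3, hg1, hg2, hg3); simpl0; done.
- case=> N1 N2 N3 N4 N5.
  have hnd4 : forall x y z, nd4 l r x y z = 0.
    by move=> x y z; apply/eqP; rewrite subr_eq0; apply/eqP; exact: N4.
  have hnd5 : forall x y z, nd5 l r x y z = 0.
    by move=> x y z; apply/eqP; rewrite subr_eq0; apply/eqP; exact: (N5 x y z).1.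
  have hnd6 : forall x y z, nd6 l r x y z = 0.
    by move=> x y z; apply/eqP; rewrite subr_eq0; apply/eqP; exact: (N5 x y z).2.
  split.
  + case=> x a [y b] [z c]; apply: pair_ext.
    * rewrite ?(fstD, fstN, ds1, fst_pair).
      apply/eqP; rewrite -subr_eq0; apply/eqP; rewrite leibA //.
      rewrite ?(hpl1, hpl2, hpl3); simpl0; done.
    * apply/lfunP => v.
      have E := m1_dual bil_l bil_r x y z a b c v.
      rewrite ?(hpl1, hpl2, hpl3) in E; rewrite ?(oppr0, addr0, add0r, subr0, sub0r, u0) in E.
      apply: (etrans E); symmetry; exact: add_lfunE.
  + case=> x a [y b] [z c]; apply: pair_ext.
    * rewrite ?(fstD, fstN, ds1, fst_pair).
      apply/eqP; rewrite -subr_eq0; apply/eqP; rewrite leibA //.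
      rewrite ?(hpl1, hpl2, hpl3); simpl0; done.
    * apply/lfunP => v.
      have E := m2_dual bil_l bil_r x y z a b c v.
      rewrite ?(hpl1, hpl2, hpl3) in E; rewrite ?(oppr0, addr0, add0r, subr0, sub0r, u0) in E.
      apply: (etrans E); symmetry; exact: add_lfunE.
  + case=> x a [y b] [z c]; apply: pair_ext.
    * rewrite ?(fstD, fstN, ds1, fst_pair) compA //.
      rewrite ?(hpl1, hpl2, hpl3); simpl0; done.
    * apply/lfunP => v; rewrite snd0 zero_lfunE.
      have E := comp_dual bil_l bil_r x y z a b c v.
      rewrite gcert1 // gcert2 // gcert3 // in E.
      rewrite ?(hpl1, hpl2, hpl3, hnd4, hnd5, hnd6) in E; rewrite ?(oppr0, addr0, add0r, subr0, sub0r, u0) in E.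
      exact: E.
Qed.
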